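(* Let $k$ and $q$ be natural numbers. If $G$ is a graph containing $4kq$ pairwise edge-disjoint spanning trees, then $G$ has a spanning $q$-edge-connected subgraph $H$ such that $d(v,H) < d(v,G)/k$ for every $v\in V(G)$.
   Context: All graphs are finite and loopless but may have multiple edges. $d(v,H)$ denotes the degree of vertex $v$ in graph $H$. *)

(* Defs.v *)
(* A finite loopless multigraph is given by a finite vertex
   type V, a finite edge type E and the two endpoints src e, tgt e of each
   edge (with src e != tgt e).  Spanning subgraphs are sets of edges. *)
From mathcomp Require Import all_boot all_order all_algebra.
Set Implicit Arguments. Unset Strict Implicit. Unset Printing Implicit Defensive.

Section MultiGraph.
Variables (V E : finType) (src tgt : E -> V).

Definition loopless := forall e, src e != tgt e.

Definition adj (F : {set E}) : rel V := fun x y =>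
  [exists e in F, ((src e == x) && (tgt e == y)) || ((src e == y) && (tgt e == x))].

Definition connectedF (F : {set E}) := forall x y : V, connect (adj F) x y.

(* acyclic: no cycle, i.e. no edge of F lies on a cycle: its endpoints are
   disconnected once it is removed (this also excludes parallel edges) *)
Definition acyclicF (F : {set E}) :=
  forall e, e \in F -> ~~ connect (adj (F :\ e)) (src e) (tgt e).

Definition spanning_tree (F : {set E}) := connectedF F /\ acyclicF F.

Definition edge_connected (q : nat) (F : {set E}) :=
  forall S : {set E}, #|S| < q -> connectedF (F :\: S).

(* degree of v in (V, F); loopless, so each incident edge counts once *)
Definition deg (F : {set E}) (v : V) : nat :=
  #|[set e in F | (src e == v) || (tgt e == v)]|.
End MultiGraph.

(* Main.v *)
Require Import Defs.
From mathcomp Require Import all_boot zify.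
Set Implicit Arguments. Unset Strict Implicit. Unset Printing Implicit Defensive.

Section G.
Variables (V E : finType) (src tgt : E -> V).

Implicit Types (A B F : {set E}) (e g : E).
Local Notation adjF := (adj src tgt).
Local Notation conn F := (connect (adj src tgt F)).

Definition inc (e : E) (v : V) := (src e == v) || (tgt e == v).

Lemma adjP (F : {set E}) x y : reflect (exists2 e, e \in F &
   ((src e == x) && (tgt e == y)) || ((src e == y) && (tgt e == x))) (adjF F x y).
Proof.
apply: (iffP existsP) => [[e /andP[eF h]]|[e eF h]]; exists e => //.
by rewrite eF.
Qed.

Lemma adj_sym (F : {set E}) : symmetric (adjF F).
Proof.
move=> x y; apply/adjP/adjP => [][e eF h]; exists e => //; by rewrite orbC.
Qed.

Lemma conn_sym (F : {set E}) : connect_sym (adjF F).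
Proof. exact: sym_connect_sym (adj_sym F). Qed.

Lemma edge_conn A e : e \in A -> conn A (src e) (tgt e).
Proof. by move=> eA; apply: connect1; apply/adjP; exists e; rewrite ?eqxx. Qed.

Lemma conn_sub A B : (forall e, e \in A -> conn B (src e) (tgt e)) ->
  forall x y, conn A x y -> conn B x y.
Proof.
move=> h x y; apply: connect_sub => u w /adjP [e eA /orP[]/andP[/eqP<- /eqP<-]].
  exact: h.
by rewrite conn_sym; exact: h.
Qed.

Lemma conn_mono A B : A \subset B -> forall x y, conn A x y -> conn B x y.
Proof. by move=> sAB; apply: conn_sub => e eA; apply: edge_conn; apply: (subsetP sAB). Qed.
Arguments conn_mono [A B] _ [x y] _.

Lemma conn_trans A x y z : conn A x y -> conn A y z -> conn A x z.
Proof. exact: connect_trans. Qed.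

Lemma isolated A v y : (forall e, e \in A -> ~~ inc e v) -> conn A v y -> y = v.
Proof.
move=> h /connectP [[|w p] /= pth ->] //.
case/andP: pth => /adjP [e eA /orP[]/andP[/eqP ev1 /eqP ev2]];
  by have := h e eA; rewrite /inc ev1 ev2 eqxx ?orbT.
Qed.

Definition cls (F : {set E}) x := [set y | conn F x y].
Definition ncomp (F : {set E}) := #|[set cls F x | x : V]|.

Lemma cls_eq F x y : conn F x y -> cls F x = cls F y.
Proof.
move=> c; apply/setP => z; rewrite !inE; apply/idP/idP => h.
  by apply: conn_trans h; rewrite conn_sym.
exact: conn_trans c h.
Qed.

Lemma ncomp_ext A B : (forall x y, conn A x y = conn B x y) -> ncomp A = ncomp B.
Proof.
move=> h; rewrite /ncomp.
suff -> : [set cls A x | x : V] = [set cls B x | x : V] by [].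
apply: eq_imset => x.
by apply/setP => y; rewrite !inE h.
Qed.

Lemma ncomp_le A B : (forall x y, conn A x y -> conn B x y) -> ncomp B <= ncomp A.
Proof.
move=> h; rewrite /ncomp.
pose g (C : {set V}) := [set y | [exists z in C, conn B z y]].
have -> : [set cls B x | x : V] = [set g C | C in [set cls A x | x : V]].
  rewrite -imset_comp; apply: eq_imset => x /=; apply/setP => y; rewrite !inE.
  apply/idP/existsP => [c|[z /andP[]]]; first by exists x; rewrite inE connect0.
  by rewrite inE => /h; apply: conn_trans.
exact: leq_imset_card.
Qed.

Lemma ncomp_set0 : ncomp set0 = #|V|.
Proof.
rewrite /ncomp.
have -> : [set cls set0 x | x : V] = [set [set x] | x : V].
  apply: eq_imset => x; apply/setP => y; rewrite !inE; apply/idP/idP.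
    by move/(isolated (A := set0)) => -> //; move=> e; rewrite inE.
  by move/eqP => ->; rewrite connect0.
by rewrite card_imset //; apply: set1_inj.
Qed.

Section Del.
Variables (A : {set E}) (e : E).
Hypothesis eA : e \in A.
Let B := A :\ e.
Let a := src e.
Let b := tgt e.

Lemma conn_del_conn : conn B a b -> forall x y, conn A x y = conn B x y.
Proof.
move=> cab x y; apply/idP/idP; last by apply: conn_mono; apply: subD1set.
apply: conn_sub => g gA; case: (g =P e) => [->|/eqP ne]; first by [].
by apply: edge_conn; rewrite !inE ne.
Qed.

Lemma conn_delP : ~~ conn B a b -> forall x y, conn A x y =
  conn B x y || ((conn B x a || conn B x b) && (conn B y a || conn B y b)).
Proof.
move=> nab x y; apply/idP/idP.
  pose Q := [pred y | conn B x y || ((conn B x a || conn B x b) && (conn B y a || conn B y b))].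
  have cQ : closed (adjF A) Q.
    move=> u w /adjP [g gA hg].
    case: (g =P e) => [gE|/eqP ne].
      subst g; rewrite !inE.
      case/orP: hg => /andP[/eqP <- /eqP <-]; rewrite -/a -/b !connect0 /= ?orbT ?andbT;
        by case: (conn B x a); case: (conn B x b).
    have gB : g \in B by rewrite !inE ne.
    have cuw : conn B u w.
      by case/orP: hg => /andP[/eqP <- /eqP <-]; [|rewrite conn_sym]; apply: edge_conn.
    rewrite !inE.
    have e1 : conn B x u = conn B x w.
      apply/idP/idP => h; [exact: conn_trans h cuw|].
      by apply: conn_trans h _; rewrite conn_sym.
    have e2 : forall z, conn B u z = conn B w z.
      move=> z; apply/idP/idP => h; [|exact: conn_trans cuw h].
      by apply: conn_trans h; rewrite conn_sym.
    by rewrite e1 e2 (e2 b).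
  move=> c; have := closed_connect cQ c; rewrite !inE connect0 /= => <-.
  by [].
case/orP => [|/andP[h1 h2]]; first by apply: conn_mono; apply: subD1set.
have sBA : B \subset A by apply: subD1set.
have cab : conn A a b by apply: edge_conn.
have cba : conn A b a by rewrite conn_sym.
have hx : conn A x a.
  case/orP: h1 => h; first exact: (conn_mono sBA h).
  by apply: conn_trans (conn_mono sBA h) cba.
have hy : conn A a y.
  case/orP: h2 => h; rewrite conn_sym; first exact: (conn_mono sBA h).
  by apply: conn_trans (conn_mono sBA h) cba.
exact: conn_trans hx hy.
Qed.

Lemma ncomp_del : if conn B a b then ncomp A = ncomp B else (ncomp A).+1 = ncomp B.
Proof.
case: ifP => [cab|/negbT nab]; first exact: ncomp_ext (conn_del_conn cab).
set I := [set cls B x | x : V].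
set ca := cls B a; set cb := cls B b.
have clsA : forall x, cls A x = if conn B x a || conn B x b then ca :|: cb else cls B x.
  move=> x; apply/setP => y; rewrite !inE (conn_delP nab).
  case: ifP => hx /=; last by rewrite orbF inE.
  rewrite !inE ![conn B _ y]conn_sym.
  apply/idP/idP => [/orP[cyx|//]|h]; last by rewrite h orbT.
  by case/orP: hx => h; rewrite (conn_trans cyx h) ?orbT.
have eqI : [set cls A x | x : V] = (ca :|: cb) |: (I :\ ca :\ cb).
  apply/setP => C; rewrite !inE; apply/imsetP/idP.
    case=> x _ ->; rewrite clsA; case: ifP => hx; first by rewrite eqxx.
    have nxa : cls B x != ca.
      apply/negP => /eqP h; move: hx; have : x \in ca by rewrite -h inE connect0.
      by rewrite inE conn_sym => ->.
    have nxb : cls B x != cb.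
      apply/negP => /eqP h; move: hx; have : x \in cb by rewrite -h inE connect0.
      by rewrite inE conn_sym => ->; rewrite orbT.
    by rewrite nxa nxb /=; apply/orP; right; apply/imsetP; exists x.
  case/orP => [/eqP ->|/andP[nb /andP[na /imsetP[x _ Cx]]]].
    by exists a => //; rewrite clsA connect0.
  subst C; exists x => //; rewrite clsA; case: ifP => // /orP[h|h].
    by move: na; rewrite (cls_eq h) -/ca eqxx.
  by move: nb; rewrite (cls_eq h) -/cb eqxx.
rewrite /ncomp eqI cardsU1.
have nU : (ca :|: cb) \notin I :\ ca :\ cb.
  apply/negP => /setD1P [_ /setD1P [_ /imsetP [z _ hz]]].
  have za : conn B z a.
    have : a \in ca :|: cb by rewrite /ca /cb /cls !inE connect0.
    by rewrite hz inE.
  have : b \in ca :|: cb by rewrite /ca /cb /cls !inE connect0 orbT.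
  by rewrite hz (cls_eq za) /cls inE (negbTE nab).
rewrite nU.
rewrite (cardsD1 ca I) (cardsD1 cb (I :\ ca)).
have -> : ca \in I by apply: imset_f.
have -> : cb \in I :\ ca.
  rewrite !inE imset_f // andbT; apply/negP => /eqP h.
  have : b \in cb by rewrite /cb /cls inE connect0.
  by rewrite h inE (negbTE nab).
by [].
Qed.

End Del.

Lemma GL1 A : #|V| <= #|A| + ncomp A.
Proof.
have [n] := ubnP #|A|; elim: n A => // n IH A.
case: (set_0Vmem A) => [->|[e eA]]; first by rewrite cards0 ncomp_set0.
rewrite ltnS (cardsD1 e A) eA => lt.
have := IH _ lt; have := ncomp_del eA; case: ifP => _ <-; lia.
Qed.

Lemma acyclic_sub A B : A \subset B -> acyclicF src tgt B -> acyclicF src tgt A.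
Proof.
move=> sAB acB e eA; have eB := subsetP sAB e eA.
apply/negP => c; have := acB e eB; rewrite (conn_mono _ c) //.
by apply: setSD.
Qed.

Lemma GL2 A : acyclicF src tgt A -> #|A| + ncomp A = #|V|.
Proof.
have [n] := ubnP #|A|; elim: n A => // n IH A.
case: (set_0Vmem A) => [->|[e eA]]; first by rewrite cards0 ncomp_set0.
rewrite ltnS (cardsD1 e A) eA => lt acA.
have acB : acyclicF src tgt (A :\ e) by apply: acyclic_sub acA; apply: subD1set.
have := IH _ lt acB; have := ncomp_del eA; rewrite (negbTE (acA e eA)) => <-; lia.
Qed.

Lemma GL3 A : #|A| + ncomp A = #|V| -> acyclicF src tgt A.
Proof.
move=> h e eA; apply/negP => c.
have := ncomp_del eA; rewrite c => hn.
have := GL1 (A :\ e); move: h; rewrite (cardsD1 e A) eA hn; lia.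
Qed.


Lemma conn_split A e x y : e \in A -> conn A x y -> ~~ conn (A :\ e) x y ->
  (conn (A :\ e) x (src e) && conn (A :\ e) y (tgt e)) ||
  (conn (A :\ e) x (tgt e) && conn (A :\ e) y (src e)).
Proof.
move=> eA cxy nxy; have := ncomp_del eA.
case: ifP => [cab _|/negbT nab _]; first by move: nxy; rewrite -(conn_del_conn cab) cxy.
move: cxy; rewrite (conn_delP eA nab) (negbTE nxy) /=.
set B := A :\ e.
case/andP => /orP[xa|xb] /orP[ya|yb].
- by case/negP: nxy; apply: conn_trans xa _; rewrite conn_sym.
- by rewrite xa yb.
- by rewrite xb ya orbT.
- by case/negP: nxy; apply: conn_trans xb _; rewrite conn_sym.
Qed.

Lemma cls_disj A x y : ~~ conn A x y -> [disjoint cls A x & cls A y].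
Proof.
move=> nxy; rewrite -setI_eq0; apply/eqP/setP => z; rewrite !inE.
apply/negP => /andP[h1 h2]; move: nxy; rewrite (conn_trans h1) //.
by rewrite conn_sym.
Qed.

Definition In (P : {set V}) := [set e | (src e \in P) && (tgt e \in P)].
Definition touch (S : {set V}) := [set e | (src e \in S) || (tgt e \in S)].
Lemma touchE S e : (e \in touch S) = (src e \in S) || (tgt e \in S).
Proof. by rewrite inE. Qed.
Lemma InE P e : (e \in In P) = (src e \in P) && (tgt e \in P).
Proof. by rewrite inE. Qed.

Lemma conn_restr A u w : conn A u w -> conn (A :&: In (cls A u)) u w.
Proof.
move=> cuw.
pose Q := [pred y | conn (A :&: In (cls A u)) u y].
have cQ : closed (adjF A) Q.
  move=> y z /adjP [g gA hg]; rewrite !inE.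
  have cyz : conn A y z.
    by case/orP: hg => /andP[/eqP <- /eqP <-]; [|rewrite conn_sym]; apply: edge_conn.
  case uy: (conn A u y).
    have uz : conn A u z by apply: conn_trans uy cyz.
    have gI : g \in A :&: In (cls A u).
      rewrite !inE gA /=.
      by case/orP: hg => /andP[/eqP -> /eqP ->]; rewrite uy uz.
    have cyz' : conn (A :&: In (cls A u)) y z.
      by case/orP: hg => /andP[/eqP <- /eqP <-]; [|rewrite conn_sym]; apply: edge_conn.
    apply/idP/idP => h; first exact: conn_trans h cyz'.
    by apply: conn_trans h _; rewrite conn_sym.
  have nuz : ~~ conn A u z.
    by apply/negP => uz; move: uy; rewrite (conn_trans uz) // conn_sym.
  apply/idP/idP => h.
    by move: uy; rewrite (conn_mono _ h) // subsetIl.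
  by move: nuz; rewrite (conn_mono _ h) // subsetIl.
by have := closed_connect cQ cuw; rewrite !inE connect0 => <-.
Qed.

Lemma ncomp_conn A (x0 : V) : connectedF src tgt A -> ncomp A = 1.
Proof.
move=> cA; rewrite /ncomp.
have -> : [set cls A x | x : V] = [set cls A x0].
  apply/setP => C; rewrite !inE; apply/imsetP/eqP => [[x _ ->]|->].
    by apply: cls_eq; rewrite conn_sym; apply: cA.
  by exists x0.
by rewrite cards1.
Qed.

Lemma ncomp2 A x y : ~~ conn A x y -> 2 <= ncomp A.
Proof.
move=> nxy; rewrite /ncomp.
have ne : cls A x != cls A y.
  apply/negP => /eqP h; move: nxy.
  have : y \in cls A x by rewrite h inE connect0.
  by rewrite inE => ->.
have <- : #|[set cls A x; cls A y]| = 2 by rewrite cards2 ne.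
apply: subset_leq_card; apply/subsetP => C; rewrite !inE => /orP[]/eqP ->;
  by apply/imsetP; eexists.
Qed.

Lemma ncomp_iso A (W : {set V}) w0 : w0 \in W -> A \subset In W ->
  #|~: W| + 1 <= ncomp A.
Proof.
move=> w0W sA; rewrite /ncomp.
have clsv : forall v, v \notin W -> cls A v = [set v].
  move=> v vW; apply/setP => y; rewrite !inE; apply/idP/idP => [|/eqP->]; last exact: connect0.
  move/(isolated (A := A)) => ->; first by [].
  move=> e eA; have := subsetP sA e eA; rewrite !inE /inc.
  by case/andP => h1 h2; apply/negP => /orP[]/eqP ev; move: vW; rewrite -ev ?h1 ?h2.
have sub : cls A w0 |: [set [set v] | v in ~: W] \subset [set cls A x | x : V].
  apply/subsetP => C; rewrite !inE => /orP[/eqP->|/imsetP[v]]; first by apply/imsetP; exists w0.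
  rewrite inE => vW ->; apply/imsetP; exists v => //; by rewrite clsv.
apply: leq_trans (subset_leq_card sub).
rewrite cardsU1 card_imset; last exact: set1_inj.
have -> : cls A w0 \notin [set [set v] | v in ~: W].
  apply/imsetP => [][v]; rewrite inE => vW h.
  have : w0 \in cls A w0 by rewrite inE connect0.
  by rewrite h inE => /eqP ew; move: vW; rewrite -ew w0W.
by rewrite addnC.
Qed.

Lemma card_sum (P : pred E) : #|[set e | P e]| = \sum_e P e.
Proof.
rewrite -sum1_card big_mkcond /=; apply: eq_bigr => e _; rewrite inE.
by case: (P e).
Qed.

Lemma degE A v : deg src tgt A v = \sum_e ((e \in A) && inc e v).
Proof. by rewrite /deg -card_sum. Qed.

Lemma deg_ext A B v : (forall e, inc e v -> (e \in A) = (e \in B)) ->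
  deg src tgt A v = deg src tgt B v.
Proof.
move=> h; rewrite !degE; apply: eq_bigr => e _.
by case iev: (inc e v); rewrite ?andbF // h.
Qed.

Lemma deg_sub A B v : A \subset B -> deg src tgt A v <= deg src tgt B v.
Proof.
move=> sAB; rewrite !degE; apply: leq_sum => e _.
case eA: (e \in A) => //=; by rewrite (subsetP sAB e eA).
Qed.

Lemma deg_D1 A e v : e \in A -> deg src tgt A v = inc e v + deg src tgt (A :\ e) v.
Proof.
move=> eA; rewrite !degE (bigD1 e) //= eA /=; congr (_ + _).
rewrite [RHS](bigD1 e) //= !inE eqxx /= add0n.
apply: eq_bigr => g ng; by rewrite !inE ng.
Qed.

Lemma deg_U1 A g v : g \notin A -> deg src tgt (g |: A) v = inc g v + deg src tgt A v.
Proof.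
move=> gA; rewrite (deg_D1 (A := g |: A) (e := g)) ?setU11 //.
by rewrite setU1K.
Qed.

Hypothesis loopless_st : loopless src tgt.

Lemma sum_deg A (S : {set V}) :
  \sum_(v in S) deg src tgt A v = \sum_e ((e \in A) * ((src e \in S) + (tgt e \in S))).
Proof.
under eq_bigr do rewrite degE.
rewrite exchange_big /=; apply: eq_bigr => e _.
case: (e \in A); rewrite ?mul0n ?mul1n /=; last by rewrite big1.
rewrite /inc.
have inc2 : forall v, ((src e == v) || (tgt e == v)) = (src e == v) + (tgt e == v) :> nat.
  move=> v; case: (src e =P v) => [<-|]; last by [].
  by have := loopless_st e; rewrite eq_sym => /negbTE ->.
under eq_bigr do rewrite inc2.
rewrite big_split /=.
have one : forall w, \sum_(v in S) (w == v) = (w \in S).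
  move=> w; case wS: (w \in S).
    rewrite (bigD1 w) //= eqxx big1 // => v /andP[_]; by rewrite eq_sym => /negbTE ->.
  rewrite big1 // => v vS; apply/eqP; rewrite eqb0; apply/eqP => wv.
  by move: wS; rewrite wv vS.
by rewrite !one.
Qed.

Lemma card_sumS (X : {set E}) : #|X| = \sum_e (e \in X).
Proof. by rewrite -sum1_card big_mkcond /=; apply: eq_bigr => e _; case: (e \in X). Qed.

Lemma sum_deg_ub A (S : {set V}) :
  \sum_(v in S) deg src tgt A v <= #|A :&: touch S| + #|A :&: In S|.
Proof.
rewrite sum_deg !card_sumS -big_split /=; apply: leq_sum => e _.
rewrite !inE; case: (e \in A) => //=.
by case: (src e \in S); case: (tgt e \in S).
Qed.

Lemma sum_deg_lb A (S : {set V}) :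
  #|A :&: touch S| <= \sum_(v in S) deg src tgt A v.
Proof.
rewrite sum_deg !card_sumS; apply: leq_sum => e _.
rewrite !inE; case: (e \in A) => //=.
by case: (src e \in S); case: (tgt e \in S).
Qed.

Lemma sum_deg_disj m (T : 'I_m -> {set E}) (U : {set E}) v :
  (forall i, T i \subset U) -> (forall i j, i != j -> [disjoint T i & T j]) ->
  \sum_i deg src tgt (T i) v <= deg src tgt U v.
Proof.
move=> sT dT; under eq_bigr do rewrite degE.
rewrite exchange_big degE; apply: leq_sum => e _ /=.
case: (boolP [exists i, e \in T i]) => [/existsP[i ei]|].
  rewrite (bigD1 i) //= ei (subsetP (sT i) e ei) /= big1 ?addn0 // => j ji.
  by rewrite (disjointFl (dT _ _ ji) ei).
rewrite negb_exists => /forallP h; rewrite big1 // => i _; by rewrite (negbTE (h i)).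
Qed.

Definition agree A B (X : {set E}) := forall e, e \notin X -> (e \in A) = (e \in B).
Definition conn_in A (P : {set V}) :=
  forall u w, u \in P -> w \in P -> conn (A :&: In P) u w.

Lemma card_agree A B X : agree A B X -> #|A| + #|B :&: X| = #|B| + #|A :&: X|.
Proof.
move=> h; rewrite -(cardsID X A) -(cardsID X B).
have -> : A :\: X = B :\: X.
  by apply/setP => e; rewrite !inE; case eX: (e \in X) => //=; rewrite h ?eX.
lia.
Qed.

Lemma In_sub (P Q : {set V}) : P \subset Q -> In P \subset In Q.
Proof.
move=> sPQ; apply/subsetP => e; rewrite !inE => /andP[h1 h2].
by rewrite (subsetP sPQ _ h1) (subsetP sPQ _ h2).
Qed.

Lemma conn_in_cls A B v : B \subset A -> conn_in A (cls B v).
Proof.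
move=> sBA u w; rewrite !inE => vu vw.
have uw : conn B u w by apply: conn_trans vw; rewrite conn_sym.
have := conn_restr uw; rewrite -(cls_eq vu).
apply: conn_mono; by apply: setSI.
Qed.

Lemma conn_in_conn A P u w : conn_in A P -> u \in P -> w \in P -> conn A u w.
Proof. by move=> h uP wP; apply: conn_mono (h u w uP wP); apply: subsetIl. Qed.

Lemma swap_conn A B (P1 P2 : {set V}) :
  agree A B (In P1 :|: In P2) -> conn_in A P1 -> conn_in A P2 ->
  conn_in B P1 -> conn_in B P2 -> forall a b, conn A a b = conn B a b.
Proof.
move=> ag cA1 cA2 cB1 cB2.
have side : forall A' B', agree A' B' (In P1 :|: In P2) -> conn_in B' P1 -> conn_in B' P2 ->
    forall a b, conn A' a b -> conn B' a b.
  move=> A' B' ag' c1 c2; apply: conn_sub => e eA.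
  case e1: (e \in In P1); first by move: e1; rewrite inE => /andP[h1 h2]; apply: conn_in_conn c1 _ _.
  case e2: (e \in In P2); first by move: e2; rewrite inE => /andP[h1 h2]; apply: conn_in_conn c2 _ _.
  by apply: edge_conn; rewrite -ag' // in_setU e1 e2.
move=> a b; apply/idP/idP; apply: side => //.
by move=> e he; rewrite ag.
Qed.

Lemma remove_nonsep A B x y : acyclicF src tgt A -> B \subset A ->
  (forall e, e \in B -> conn (A :\ e) x y) -> conn A x y -> conn (A :\: B) x y.
Proof.
move=> acA; have [n] := ubnP #|B|; elim: n B => // n IH B.
case: (set_0Vmem B) => [->|[e eB]]; first by rewrite setD0.
rewrite ltnS (cardsD1 e B) eB => lt sBA hB cxy.
have sB' : B :\ e \subset A by apply: subset_trans sBA; apply: subD1set.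
have IH' := IH _ lt sB' (fun g gB => hB g (subsetP (subD1set B e) g gB)) cxy.
have -> : A :\: B = (A :\: (B :\ e)) :\ e.
  apply/setP => g; rewrite !inE; case: (g =P e) => [->|]; first by rewrite eB.
  by [].
have eA : e \in A by apply: (subsetP sBA).
have eA' : e \in A :\: (B :\ e) by rewrite !inE eqxx eA.
case c: (conn ((A :\: (B :\ e)) :\ e) x y) => //.
have hs := conn_split eA' IH' (negbT c).
have sub : (A :\: (B :\ e)) :\ e \subset A :\ e.
  by apply/subsetP => g; rewrite !inE => /andP[-> /andP[_ ->]].
have hxy := hB e eB.
case/negP: (acA e eA); case/orP: hs => /andP[h1 h2].
  apply: conn_trans (conn_trans _ hxy) (conn_mono sub h2); rewrite conn_sym.
  exact: (conn_mono sub h1).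
apply: conn_trans (conn_trans _ (_ : conn (A :\ e) y x)) (conn_mono sub h1).
  by rewrite conn_sym; exact: (conn_mono sub h2).
by rewrite conn_sym.
Qed.

Lemma conn_in_D1 A P e : e \notin In P -> conn_in A P -> conn_in (A :\ e) P.
Proof.
move=> eP h u w uP wP; have -> : (A :\ e) :&: In P = A :&: In P.
  apply/setP => g; rewrite in_setI in_setD1 in_setI; case: (g =P e) => [->|] //=.
  by rewrite (negbTE eP) !andbF.
exact: h.
Qed.

Section Closure.
Variables (U : {set E}) (f : V -> nat) (F : {set E}).
Implicit Types (S P : {set V}).

Definition fforest A := [/\ A \subset U, acyclicF src tgt A & forall v, deg src tgt A v <= f v].

Hypothesis FF : fforest F.
Hypothesis Fmax : forall A, fforest A -> #|A| <= #|F|.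

Definition Fo (S : {set V}) := F :\: touch S.
Definition clsS S x := cls (Fo S) x.

Definition witness S v A := [/\ fforest A, #|A| = #|F|, agree A F (In (clsS S v)),
   conn_in A (clsS S v) & deg src tgt A v < f v].

Definition Inv S := (forall s, s \in S -> f s <= deg src tgt F s) /\
  forall v, v \notin S -> exists A, witness S v A.

Definition nobad S := forall g, g \in U -> src g \notin S -> tgt g \notin S ->
  conn (Fo S) (src g) (tgt g).

Lemma Fo_sub S : Fo S \subset F. Proof. exact: subsetDl. Qed.

Lemma Fo_mono S S' : S' \subset S -> Fo S \subset Fo S'.
Proof.
move=> sS; apply/subsetP => e; rewrite !inE => /andP[h ->]; rewrite andbT.
apply: contra h => /orP[]h; by rewrite (subsetP sS _ h) ?orbT.
Qed.

Lemma Fo_iso S s : s \in S -> forall e, e \in Fo S -> ~~ inc e s.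
Proof.
move=> sS e; rewrite !inE negb_or /inc => /andP[/andP[h1 h2] _].
by apply/negP => /orP[]/eqP ev; [move: h1|move: h2]; rewrite ev sS.
Qed.

Lemma cls_avoid S x s : x \notin S -> s \in S -> s \notin clsS S x.
Proof.
move=> xS sS; rewrite inE; apply/negP => c.
rewrite conn_sym in c; have := isolated (Fo_iso sS) c => exs.
by move: xS; rewrite exs sS.
Qed.

Lemma In_avoid S x e : x \notin S -> e \in In (clsS S x) -> e \notin touch S.
Proof.
move=> xS; rewrite !inE => /andP[h1 h2]; rewrite negb_or.
apply/andP; split; apply/negP => hs.
  by have := cls_avoid xS hs; rewrite inE h1.
by have := cls_avoid xS hs; rewrite inE h2.
Qed.

Lemma inv0 : Inv [set v | f v <= deg src tgt F v].
Proof.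
split => [s|v]; first by rewrite inE.
rewrite inE -ltnNge => lt; exists F; split => //.
exact: conn_in_cls (Fo_sub _).
Qed.

Lemma witness_grow S S' v A : S' \subset S -> witness S v A -> witness S' v A.
Proof.
move=> sS [fA cA ag ci dA]; split => //.
- have sub : In (clsS S v) \subset In (clsS S' v).
    apply: In_sub; apply/subsetP => y; rewrite !inE; apply: conn_mono.
    exact: Fo_mono.
  by move=> e ne; apply: ag; apply: contra ne; apply: (subsetP sub).
- move=> u w uP wP.
  have := conn_in_cls (v := v) (Fo_sub S') uP wP.
  apply: conn_sub => e; rewrite inE => /andP[eF eI].
  case e1: (e \in In (clsS S v)).
    move: (e1); rewrite inE => /andP[h1 h2].
    apply: conn_mono (ci _ _ h1 h2); apply: setIS; apply: In_sub.
    apply/subsetP => y; rewrite !inE; apply: conn_mono; exact: Fo_mono.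
  by apply: edge_conn; rewrite inE eI andbT ag ?e1.
Qed.
Lemma inc_notIn e w P : inc e w -> w \notin P -> e \notin In P.
Proof.
rewrite /inc !inE => /orP[]/eqP-> wP; apply/negP => /andP[h1 h2].
  by move: wP; rewrite h1.
by move: wP; rewrite h2.
Qed.

Definition Kc Ax Ay P2 := (Ax :\: In P2) :|: (Ay :&: In P2).

Lemma combine S x y Ax Ay : x \notin S -> y \notin S -> ~~ conn (Fo S) x y ->
  witness S x Ax -> witness S y Ay ->
  [/\ fforest (Kc Ax Ay (clsS S y)), #|Kc Ax Ay (clsS S y)| = #|F|,
      agree (Kc Ax Ay (clsS S y)) F (In (clsS S x) :|: In (clsS S y)),
      conn_in (Kc Ax Ay (clsS S y)) (clsS S x) /\
      conn_in (Kc Ax Ay (clsS S y)) (clsS S y) &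
      [/\ (forall a b, conn (Kc Ax Ay (clsS S y)) a b = conn F a b),
      deg src tgt (Kc Ax Ay (clsS S y)) x < f x,
      deg src tgt (Kc Ax Ay (clsS S y)) y < f y &
      (forall w, w \notin clsS S x -> w \notin clsS S y ->
         deg src tgt (Kc Ax Ay (clsS S y)) w = deg src tgt F w)]].
Proof.
move=> xS yS nxy [[sAx acAx dAx] cAx agx cix dx] [[sAy acAy dAy] cAy agy ciy dy].
set P1 := clsS S x; set P2 := clsS S y; set K := Kc Ax Ay P2.
have FF' := FF; case: FF' => [sF acF dF].
have dis : [disjoint P1 & P2] := cls_disj nxy.
have xP1 : x \in P1 by rewrite inE connect0.
have yP2 : y \in P2 by rewrite inE connect0.
have nI : forall e, e \in In P1 -> e \notin In P2.
  move=> e; rewrite [e \in In P1]inE => /andP[h1 _]; by rewrite inE (disjointFr dis h1).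
have memK : forall e, (e \in K) = if e \in In P2 then e \in Ay else e \in Ax.
  by move=> e; rewrite /K /Kc in_setU in_setD in_setI; case: (e \in In P2); case: (e \in Ax); case: (e \in Ay).
have agK : agree K F (In P1 :|: In P2).
  move=> e; rewrite in_setU negb_or => /andP[n1 n2]; by rewrite memK (negbTE n2) agx.
have K1 : K :&: In P1 = Ax :&: In P1.
  apply/setP => e; rewrite !in_setI memK; case e1: (e \in In P1); last by rewrite !andbF.
  by rewrite (negbTE (nI _ e1)).
have K2 : K :&: In P2 = Ay :&: In P2.
  by apply/setP => e; rewrite !in_setI memK; case: (e \in In P2); rewrite ?andbF.
have ciK1 : conn_in K P1 by rewrite /conn_in K1.
have ciK2 : conn_in K P2 by rewrite /conn_in K2.
have ciF1 : conn_in F P1 by apply: conn_in_cls; apply: Fo_sub.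
have ciF2 : conn_in F P2 by apply: conn_in_cls; apply: Fo_sub.
have cK : forall a b, conn K a b = conn F a b := swap_conn agK ciK1 ciK2 ciF1 ciF2.
have dK : forall w, deg src tgt K w =
    if w \in P1 then deg src tgt Ax w else if w \in P2 then deg src tgt Ay w else deg src tgt F w.
  move=> w; case w1: (w \in P1).
    apply: deg_ext => e iew; rewrite memK.
    by rewrite (negbTE (inc_notIn iew (negbT (disjointFr dis w1)))).

  case w2: (w \in P2).
    apply: deg_ext => e iew; rewrite memK; case: ifP => // n2.
    by rewrite agx ?(inc_notIn iew) ?w1 // agy ?n2.
  apply: deg_ext => e iew; rewrite memK (negbTE (inc_notIn iew _)) ?w2 //.
  by rewrite agx ?(inc_notIn iew) ?w1.
have cardK : #|K| = #|F|.
  have h1 : agree K Ax (In P2).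
    by move=> e n2; rewrite memK (negbTE n2).
  have h2 : Ax :&: In P2 = F :&: In P2.
    by apply/setP => e; rewrite !in_setI; case e2: (e \in In P2); rewrite ?andbF // agx //;
      apply/negP => /nI; rewrite e2.
  have := card_agree h1; have := card_agree agy; rewrite -/P2 K2 h2 cAx cAy; lia.
have sK : K \subset U.
  apply/subsetP => e; rewrite memK; case: ifP => _ h.
    exact: (subsetP sAy).
  exact: (subsetP sAx).
have dKf : forall v, deg src tgt K v <= f v.
  by move=> v; rewrite dK; case: ifP => _; [|case: ifP => _].
have acK : acyclicF src tgt K.
  apply: GL3; rewrite cardK (ncomp_ext cK); exact: GL2.
split => //; split => //.
- by rewrite dK xP1.
- by rewrite dK (disjointFl dis yP2) yP2.
- by move=> w w1 w2; rewrite dK (negbTE w1) (negbTE w2).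
Qed.

Lemma step S : Inv S -> nobad S \/ exists S', #|S'| < #|S| /\ Inv S'.
Proof.
move=> [satS wit].
case: (boolP [forall g, (g \in U) ==> (src g \notin S) ==> (tgt g \notin S) ==>
   conn (Fo S) (src g) (tgt g)]) => [/forallP h|].
  by left => g gU xS yS; have := h g; rewrite gU xS yS.
rewrite negb_forall => /existsP [g]; rewrite !negb_imply => /andP[gU /andP[xS /andP[yS nxy]]].
right.
set x := src g in xS nxy *; set y := tgt g in yS nxy *.
have FF' := FF; case: FF' => [sF acF dF].
have [Ax wx] := wit x xS; have [Ay wy] := wit y yS.
have [fK cardK agK [ciK1 ciK2] [cK dKx dKy dKo]] := combine xS yS nxy wx wy.
set P1 := clsS S x in fK cardK agK ciK1 ciK2 cK dKx dKy dKo.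
set P2 := clsS S y in fK cardK agK ciK1 ciK2 cK dKx dKy dKo.
set K := Kc Ax Ay P2 in fK cardK agK ciK1 ciK2 cK dKx dKy dKo.
case: fK => [sK acK dK].
have gxy : conn K x y = conn F x y by rewrite cK.
case cxy: (conn F x y); last first.
  have gK : g \notin K by apply/negP => gK; move: gxy; rewrite cxy (edge_conn gK).
  have fK' : fforest (g |: K).
    split.
    - by rewrite subUset sub1set gU sK.
    - apply: GL3; have := ncomp_del (setU11 g K); rewrite setU1K //.
      rewrite -/x -/y gxy cxy => h; rewrite cardsU1 gK.
      by have := GL2 acK; lia.
    - move=> v; rewrite deg_U1 //; case igv: (inc g v) => /=; last exact: dK.
      by move: igv; rewrite /inc => /orP[]/eqP <-.
  by have := Fmax fK'; rewrite cardsU1 gK cardK; lia.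
pose Sep := [set e in F | ~~ conn (F :\ e) x y].
pose Z := S :&: [set v | [exists e in Sep, inc e v]].
pose S' := S :\: Z.
pose A := F :\: [set e in F | (e \in touch S) && (e \notin Sep)].
have cA : conn A x y.
  apply: remove_nonsep => //; first by apply/subsetP => e; rewrite inE => /andP[].
  by move=> e; rewrite !inE => /and3P[eF _]; rewrite eF /= negbK.
have sAF : A \subset F by apply: subsetDl.
have sA : A \subset Fo S'.
  apply/subsetP => e eA.
  have eF : e \in F := subsetP sAF e eA.
  have key : forall w, inc e w -> w \in S -> w \in Z.
    move=> w iw wS; move: eA; rewrite in_setD inE eF andbT /= negb_and negbK => /orP[nt|eS].
      by move: nt; rewrite inE; move: iw; rewrite /inc => /orP[]/eqP ->; rewrite wS ?orbT.
    by rewrite in_setI wS inE; apply/existsP; exists e; rewrite eS.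
  rewrite in_setD eF andbT inE negb_or.
  apply/andP; split; apply/negP; rewrite in_setD => /andP[nz sS]; move: nz;
    by rewrite key ?sS // /inc eqxx ?orbT.
have cS'xy : conn (Fo S') x y by apply: (conn_mono sA cA).
have sS' : S' \subset S by apply: subsetDl.
have [z zZ] : exists z, z \in Z.
  case: (boolP (A \subset Fo S)) => [sub|/subsetPn [e eA eFo]].
    by move: nxy; rewrite (conn_mono sub cA).
  have eF := subsetP sAF e eA.
  have et : e \in touch S by move: eFo; rewrite in_setD eF andbT negbK.
  have eS : e \in Sep.
    apply/negPn/negP => nS; move: eA; rewrite in_setD eF andbT; apply/negP; rewrite negbK.
    by apply/setIdP; split => //; rewrite et nS.
  move: (et); rewrite inE => /orP[hs|hs].
    by exists (src e); rewrite !inE hs /=; apply/existsP; exists e; rewrite eS /inc eqxx.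
  by exists (tgt e); rewrite !inE hs /=; apply/existsP; exists e; rewrite eS /inc eqxx orbT.
have ltS : #|S'| < #|S|.
  have h := cardsID Z S.
  have : 0 < #|S :&: Z|.
    rewrite card_gt0; apply/set0Pn; exists z; rewrite in_setI zZ andbT.
    by move: zZ; rewrite in_setI => /andP[].
  by move=> pos; rewrite -h -{1}[#|S :\: Z|]add0n ltn_add2r.
exists S'; split; first exact: ltS.
split.
  by move=> s; rewrite in_setD => /andP[_]; apply: satS.
move=> v vS'.
case vS: (v \in S); last first.
  by have [Av wv] := wit v (negbT vS); exists Av; apply: witness_grow sS' wv.
have vZ : v \in Z by move: vS'; rewrite in_setD vS andbT negbK.
have [e eSep iev] : exists2 e, e \in Sep & inc e v.
  by move: vZ; rewrite in_setI => /andP[_]; rewrite in_set => /existsP[e /andP[h1 h2]]; exists e.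
move: (eSep) => /setIdP [eF nsep].
have et : e \in touch S.
  by rewrite touchE; move: iev; rewrite /inc => /orP[]/eqP ->; rewrite vS ?orbT.
have eP1 : e \notin In P1 by apply/negP => /(In_avoid xS); rewrite et.
have eP2 : e \notin In P2 by apply/negP => /(In_avoid yS); rewrite et.
have eK : e \in K by rewrite agK // in_setU negb_or eP1 eP2.
have nKe : ~~ conn (K :\ e) x y.
  have ag' : agree (K :\ e) (F :\ e) (In P1 :|: In P2).
    by move=> h hn; rewrite !in_setD1 agK.
  have ciF1 : conn_in F P1 by apply: conn_in_cls; apply: Fo_sub.
  have ciF2 : conn_in F P2 by apply: conn_in_cls; apply: Fo_sub.
  rewrite (swap_conn ag' (conn_in_D1 eP1 ciK1) (conn_in_D1 eP2 ciK2)
     (conn_in_D1 eP1 ciF1) (conn_in_D1 eP2 ciF2)).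
  exact: nsep.
have ge : g != e.
  apply/negP => /eqP ge; move: et; rewrite -ge touchE -/x -/y (negbTE xS) (negbTE yS).
  by [].
have gKe : g \notin K :\ e by apply/negP => h; move: nKe; rewrite (edge_conn h).
have gK : g \notin K by move: gKe; rewrite in_setD1 ge.
pose Fv := g |: (K :\ e).
have ciF1 : conn_in F P1 by apply: conn_in_cls; apply: Fo_sub.
have ciF2 : conn_in F P2 by apply: conn_in_cls; apply: Fo_sub.
have cKxy : conn K x y by rewrite gxy cxy.
have gFv : g \in Fv by apply: setU11.
have sKeFv : K :\ e \subset Fv by apply: subsetUr.
have cgxy : conn Fv x y by apply: edge_conn gFv.
have cFv_e : conn Fv (src e) (tgt e).
  case/orP: (conn_split eK cKxy nKe) => /andP[h1 h2].
    apply: conn_trans (conn_trans _ cgxy) (conn_mono sKeFv h2).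
    by rewrite conn_sym; apply: (conn_mono sKeFv h1).
  apply: conn_trans (conn_trans _ _) (conn_mono sKeFv h1).
    by rewrite conn_sym; apply: (conn_mono sKeFv h2).
  by rewrite conn_sym.
have sKeK : K :\ e \subset K by apply: subD1set.
have cFvK : forall a b, conn Fv a b = conn K a b.
  move=> a b; apply/idP/idP; apply: conn_sub => h hin.
    move: hin; rewrite in_setU1 => /orP[/eqP ->|hKe]; first exact: cKxy.
    by apply: edge_conn; apply: (subsetP sKeK).
  case: (h =P e) => [->|/eqP he]; first exact: cFv_e.
  by apply: edge_conn; apply: (subsetP sKeFv); rewrite in_setD1 he.
have cardFv : #|Fv| = #|F|.
  by rewrite cardsU1 gKe -cardK (cardsD1 e K) eK.
have acFv : acyclicF src tgt Fv.
  apply: GL3; rewrite cardFv (ncomp_ext cFvK) (ncomp_ext cK); exact: GL2 acF.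
have sFv : Fv \subset U.
  rewrite subUset sub1set gU /=; apply: subset_trans sKeK sK.
have dKe : forall w, deg src tgt (K :\ e) w <= deg src tgt K w.
  by move=> w; apply: deg_sub.
have dFv : forall w, deg src tgt Fv w <= f w.
  move=> w; rewrite deg_U1 //; case igw: (inc g w) => /=.
    move: igw; rewrite /inc => /orP[]/eqP <-.
      by apply: leq_ltn_trans (dKe _) dKx.
    by apply: leq_ltn_trans (dKe _) dKy.
  by apply: leq_trans (dKe _) (dK _).
have igv : inc g v = false.
  by apply/negP; rewrite /inc => /orP[]/eqP ev; [move: xS|move: yS]; rewrite /x /y ev vS.
have vP1 : v \notin P1 by apply: cls_avoid.
have vP2 : v \notin P2 by apply: cls_avoid.
have dv : deg src tgt Fv v < f v.
  rewrite deg_U1 // igv add0n.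
  have := dKo v vP1 vP2; rewrite (deg_D1 _ eK) iev => h.
  by have := dF v; rewrite -h.
have eA : e \in A.
  rewrite in_setD eF andbT; apply/negP => /setIdP [_ /andP[_]].
  by rewrite eSep.
have nAe : ~~ conn (A :\ e) x y.
  apply: contra nsep; apply: conn_mono; apply/subsetP => h.
  by rewrite !in_setD1 => /andP[-> /(subsetP sAF)].
have cAe : conn A x (src e) && conn A x (tgt e).
  have sAe : A :\ e \subset A by apply: subD1set.
  have ce : conn A (src e) (tgt e) by apply: edge_conn.
  case/orP: (conn_split eA cA nAe) => /andP[h1 h2].
    have h1' := conn_mono sAe h1.
    by rewrite h1' (conn_trans h1' ce).
  have h1' := conn_mono sAe h1.
  by rewrite h1' (conn_trans h1' _) // conn_sym.
set M := clsS S' v.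
have vx : conn (Fo S') v x.
  case/andP: cAe => h1 h2; rewrite conn_sym.
  by move: iev; rewrite /inc => /orP[]/eqP <-; apply: (conn_mono sA).
have inM : forall w, conn (Fo S') x w -> w \in M.
  by move=> w xw; rewrite /M /clsS /cls in_set; apply: conn_trans vx xw.
have xM : x \in M by apply: inM; apply: connect0.
have yM : y \in M by apply: inM.
have srcM : src e \in M by apply: inM; case/andP: cAe => h1 _; apply: (conn_mono sA).
have tgtM : tgt e \in M by apply: inM; case/andP: cAe => _ h2; apply: (conn_mono sA).
have FoS : Fo S \subset Fo S' by apply: Fo_mono.
have P1M : P1 \subset M.
  by apply/subsetP => w; rewrite /P1 /clsS /cls in_set => xw; apply: inM; apply: (conn_mono FoS).
have P2M : P2 \subset M.
  apply/subsetP => w; rewrite /P2 /clsS /cls in_set => yw; apply: inM.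
  by apply: conn_trans cS'xy (conn_mono FoS yw).
have I1 := In_sub P1M.
have I2 := In_sub P2M.
have eM : e \in In M by rewrite InE srcM tgtM.
have gM : g \in In M by rewrite InE -/x -/y xM yM.
have ciFM : conn_in F M by apply: conn_in_cls; apply: Fo_sub.
have ciKM : conn_in K M.
  move=> u w uM wM; apply: conn_sub (ciFM u w uM wM) => h /setIP [hF hM].
  case h1: (h \in In P1).
    move: (h1); rewrite InE => /andP[a1 a2].
    by apply: conn_mono (ciK1 _ _ a1 a2); apply: setIS.
  case h2: (h \in In P2).
    move: (h2); rewrite InE => /andP[a1 a2].
    by apply: conn_mono (ciK2 _ _ a1 a2); apply: setIS.
  apply: edge_conn; rewrite in_setI hM andbT agK //.
  by rewrite in_setU h1 h2.
have ciFvM : conn_in Fv M.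
  move=> u w uM wM; apply: conn_sub (ciKM u w uM wM) => h /setIP [hK hM].
  have sub : (K :&: In M) :\ e \subset Fv :&: In M.
    apply/subsetP => h'; rewrite in_setD1 in_setI => /andP[ne /andP[hK' hM']].
    by rewrite in_setI hM' andbT; apply: (subsetP sKeFv); rewrite in_setD1 ne.
  have gFM : g \in Fv :&: In M by rewrite in_setI gFv gM.
  case: (h =P e) => [->|/eqP he].
    have eKM : e \in K :&: In M by rewrite in_setI eK eM.
    have nKMe : ~~ conn ((K :&: In M) :\ e) x y.
      apply: contra nKe; apply: conn_mono; apply/subsetP => h'.
      by rewrite !in_setD1 in_setI => /andP[-> /andP[->]].
    have cg : conn (Fv :&: In M) x y by apply: edge_conn gFM.
    case/orP: (conn_split eKM (ciKM x y xM yM) nKMe) => /andP[h1 h2].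
      apply: conn_trans (conn_trans _ cg) (conn_mono sub h2).
      by rewrite conn_sym; apply: (conn_mono sub h1).
    apply: conn_trans (conn_trans _ _) (conn_mono sub h1).
      by rewrite conn_sym; apply: (conn_mono sub h2).
    by rewrite conn_sym.
  by apply: edge_conn; apply: (subsetP sub); rewrite in_setD1 he in_setI hK hM.
have agFv : agree Fv F (In M).
  move=> h hM.
  have hg : h != g by apply: contraNneq hM => ->.
  have he : h != e by apply: contraNneq hM => ->.
  have h1 : h \notin In P1 by apply: contra hM; apply: (subsetP I1).
  have h2 : h \notin In P2 by apply: contra hM; apply: (subsetP I2).
  rewrite in_setU1 (negbTE hg) /= in_setD1 he /= agK //.
  by rewrite in_setU negb_or h1 h2.
exists Fv; split.
- by split.
- exact: cardFv.
- exact: agFv.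
- exact: ciFvM.
- exact: dv.
Qed.


End Closure.

Lemma count_contra (k : nat) (U F : {set E}) (f : V -> nat) (T : 'I_(4 * k) -> {set E})
    (S : {set V}) :
  0 < k ->
  (forall i, spanning_tree src tgt (T i)) ->
  (forall i j, i != j -> [disjoint T i & T j]) -> (forall i, T i \subset U) ->
  (forall v, deg src tgt U v <= k * (f v).+1) -> (forall v, 3 <= f v) ->
  acyclicF src tgt F -> (exists x y, ~~ conn F x y) ->
  (forall s, s \in S -> f s <= deg src tgt F s) ->
  (forall g, g \in U -> src g \notin S -> tgt g \notin S ->
      conn (F :\: touch S) (src g) (tgt g)) -> False.
Proof.
move=> k0 sT dT TU dU f3 acF [x0 [y0 nxy]] satS nob.
set n := #|V|.
set Fo := F :\: touch S.
have hF := GL2 acF.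
have cF2 := ncomp2 nxy.
have hFo := GL1 Fo.
have splitF := cardsID (touch S) F.
set t := #|F :&: touch S|.
have tree_bound : forall i, t.+1 <= \sum_(v in S) deg src tgt (T i) v.
  move=> i; apply: leq_trans (sum_deg_lb _ _).
  have [cTi acTi] := sT i.
  have hT := GL2 acTi; rewrite (ncomp_conn x0 cTi) in hT.
  set Tio := T i :\: touch S.
  have acTio : acyclicF src tgt Tio by apply: acyclic_sub acTi; apply: subsetDl.
  have hTo := GL2 acTio.
  have le : ncomp Fo <= ncomp Tio.
    apply: ncomp_le; apply: conn_sub => e; rewrite in_setD touchE negb_or.
    case/andP => /andP[h1 h2] eT; exact: nob e (subsetP (TU i) e eT) h1 h2.
  have splitT := cardsID (touch S) (T i).
  rewrite -/Tio in splitT; rewrite -/t -/Fo in splitF *.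
  lia.
have sum1 : 4 * k * t.+1 <= \sum_(v in S) deg src tgt U v.
  have h : \sum_(i < 4 * k) t.+1 <= \sum_(i < 4 * k) \sum_(v in S) deg src tgt (T i) v.
    by apply: leq_sum => i _; exact: tree_bound i.
  move: h; rewrite sum_nat_const card_ord => h; apply: leq_trans h _.
  rewrite exchange_big /=; apply: leq_sum => v _.
  exact: sum_deg_disj.
have sum2 : \sum_(v in S) deg src tgt U v <= k * (\sum_(v in S) f v + #|S|).
  have h : \sum_(v in S) deg src tgt U v <= \sum_(v in S) k * (f v).+1.
    by apply: leq_sum => v _; exact: dU.
  apply: leq_trans h _.
  rewrite -big_distrr /= leq_pmul2l // -sum1_card -big_split /=.
  by rewrite leq_eqVlt; apply/orP; left; apply/eqP; apply: eq_bigr => v _; rewrite addn1.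
have sum3 : 4 * t.+1 <= \sum_(v in S) f v + #|S|.
  by rewrite -(leq_pmul2l k0) mulnA [k * 4]mulnC; apply: leq_trans sum1 sum2.
have sum4 : \sum_(v in S) f v <= t + #|F :&: In S|.
  apply: leq_trans (sum_deg_ub F S); apply: leq_sum => v vS; exact: satS.
have sum5 : 3 * #|S| <= \sum_(v in S) f v.
  rewrite mulnC -sum_nat_const; apply: leq_sum => v _; exact: f3.
case: (set_0Vmem S) => [S0|[s0 s0S]].
  by move: sum3; rewrite S0 big_set0 cards0.
have iso : #|~: S| + 1 <= ncomp (F :&: In S).
  by apply: ncomp_iso s0S _; apply: subsetIr.
have acI : acyclicF src tgt (F :&: In S) by apply: acyclic_sub acF; apply: subsetIl.
have hI := GL2 acI.
have hC := cardsC S.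
lia.
Qed.


Lemma deg_pos A v : connectedF src tgt A -> 1 < #|V| -> 0 < deg src tgt A v.
Proof.
move=> cA nV.
have [w wv] : exists w, w != v.
  apply/existsP; apply: contraLR nV; rewrite negb_exists => /forallP h.
  rewrite -leqNgt; apply: leq_trans (_ : #|[set v]| <= 1); last by rewrite cards1.
  apply: subset_leq_card; apply/subsetP => y _; rewrite inE.
  by have := h y; rewrite negbK.
have := cA v w; move/connectP => [[|u p] /= pth lst].
  by move: wv; rewrite lst eqxx.
case/andP: pth => /adjP [e eA he] _.
rewrite degE (bigD1 e) //= eA /inc.
by case/orP: he => /andP[/eqP h1 /eqP h2]; rewrite ?h1 ?h2 eqxx ?orbT.
Qed.

Definition acyclicb A := [forall e in A, ~~ conn (A :\ e) (src e) (tgt e)].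
Lemma acyclicbP A : reflect (acyclicF src tgt A) (acyclicb A).
Proof.
apply: (iffP forall_inP) => h e eA; exact: h.
Qed.

Lemma core (k : nat) (T : 'I_(4 * k) -> {set E}) :
  0 < k -> 1 < #|V| ->
  (forall i, spanning_tree src tgt (T i)) ->
  (forall i j, i != j -> [disjoint T i & T j]) ->
  exists C : {set E}, [/\ C \subset \bigcup_i T i, connectedF src tgt C &
    forall v, k * deg src tgt C v < deg src tgt (\bigcup_i T i) v].
Proof.
move=> k0 nV sT dT.
set U := \bigcup_i T i.
have TU : forall i, T i \subset U by move=> i; apply: bigcup_sup.
set f := fun v => (deg src tgt U v).-1 %/ k.
have dpos : forall v, 4 * k <= deg src tgt U v.
  move=> v; apply: leq_trans (sum_deg_disj v TU dT).
  have h : \sum_(i < 4 * k) 1 <= \sum_(i < 4 * k) deg src tgt (T i) v.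
    by apply: leq_sum => i _; apply: deg_pos => //; case: (sT i).
  by move: h; rewrite sum_nat_const card_ord muln1.
have dU : forall v, deg src tgt U v <= k * (f v).+1.
  move=> v; have := ltn_ceil (deg src tgt U v).-1 k0.
  have := dpos v; rewrite /f mulnC; set d := deg src tgt U v; set q := _ %/ k; lia.
have fk : forall v, k * f v < deg src tgt U v.
  move=> v; have := leq_divM (deg src tgt U v).-1 k; rewrite /f mulnC.
  have := dpos v; set d := deg src tgt U v; set q := _ %/ k; lia.
have f3 : forall v, 3 <= f v.
  move=> v; rewrite /f leq_divRL //; have := dpos v; lia.
pose fforestb A := [&& A \subset U, acyclicb A & [forall v, deg src tgt A v <= f v]].
have fbP : forall A, fforestb A -> fforest U f A.
  move=> A /and3P[h1 /acyclicbP h2 /forallP h3]; by split.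
have bfP : forall A, fforest U f A -> fforestb A.
  move=> A [h1 h2 h3]; apply/and3P; split => //; [exact/acyclicbP|exact/forallP].
have f0 : fforestb set0.
  apply: bfP; split; first exact: sub0set.
    by move=> e; rewrite inE.
  by move=> v; rewrite degE big1 // => e _; rewrite inE.
case: (arg_maxnP (fun A : {set E} => #|A|) f0) => F fbF Fmax'.
have FF := fbP _ fbF.
have Fmax : forall A, fforest U f A -> #|A| <= #|F|.
  by move=> A /bfP /Fmax'.
case: (FF) => [sFU acF dF].
case: (boolP [forall x, [forall y, conn F x y]]) => [/forallP cF|].
  exists F; split => //; first by move=> x y; have := cF x => /forallP.
  by move=> v; apply: leq_ltn_trans (fk v); rewrite leq_pmul2l.
rewrite negb_forall => /existsP [x]; rewrite negb_forall => /existsP [y nxy].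
exfalso.
have iter : forall n (S : {set V}), #|S| < n -> Inv U f F S -> exists S', Inv U f F S' /\ nobad U F S'.
  elim => [|n IH] S // ltS iS.
  case: (step FF Fmax iS) => [nb|[S' [lt iS']]]; first by exists S.
  by apply: IH iS'; apply: leq_trans lt _.
have [S [[satS _] nb]] := iter _ _ (ltnSn _) (inv0 FF).
apply: (count_contra k0 sT dT TU dU f3 acF _ satS nb).
by exists x, y.
Qed.


Lemma sum_card_disj m (A : 'I_m -> {set E}) (B : {set E}) :
  (forall i, A i \subset B) -> (forall i j, i != j -> [disjoint A i & A j]) ->
  \sum_i #|A i| <= #|B|.
Proof.
move=> sA dA; under eq_bigr do rewrite card_sumS.
rewrite exchange_big card_sumS; apply: leq_sum => e _ /=.
case: (boolP [exists i, e \in A i]) => [/existsP[i ei]|].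
  rewrite (bigD1 i) //= ei (subsetP (sA i) e ei) /= big1 ?addn0 // => j ji.
  by rewrite (disjointFl (dA _ _ ji) ei).
rewrite negb_exists => /forallP h; rewrite big1 // => i _; by rewrite (negbTE (h i)).
Qed.

Lemma deg_bigcup m (C : 'I_m -> {set E}) v :
  deg src tgt (\bigcup_i C i) v <= \sum_i deg src tgt (C i) v.
Proof.
under [X in _ <= X]eq_bigr do rewrite degE.
rewrite degE exchange_big /=; apply: leq_sum => e _.
case: (boolP (e \in \bigcup_i C i)) => [/bigcupP[i _ ei]|] //=.
rewrite (bigD1 i) //= ei /=; case: (inc e v) => //=.
Qed.

End G.

From mathcomp Require Import all_order all_algebra.
Import Order.TTheory GRing.Theory Num.Theory.

Theorem lemma7 (V E : finType) (src tgt : E -> V) (k q : nat) :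
  loopless src tgt -> 0 < k -> 0 < q -> 1 < #|V| ->
  (exists T : 'I_(4 * k * q) -> {set E},
      (forall i, spanning_tree src tgt (T i)) /\
      (forall i j, i != j -> [disjoint T i & T j])) ->
  exists H : {set E},
    edge_connected src tgt q H /\
    forall v : V,
      ((deg src tgt H v)%:R < (deg src tgt [set: E] v)%:R / k%:R :> rat)%R.
Proof.
move=> ll k0 q0 nV [T [sT dT]].
have idxP : forall (j : 'I_q) (l : 'I_(4 * k)), (j * (4 * k) + l < 4 * k * q)%N.
  move=> j l; have := ltn_ord j; have := ltn_ord l; nia.
pose idx j l := Ordinal (idxP j l).
have idx_inj : forall j l j' l', idx j l = idx j' l' -> j = j' /\ l = l'.
  move=> j l j' l' /(congr1 val) /= h.
  have m0 : (0 < 4 * k)%N by rewrite muln_gt0.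
  have e1 : ((j * (4 * k) + l) %/ (4 * k) = j)%N by rewrite divnMDl // divn_small // addn0.
  have e2 : ((j' * (4 * k) + l') %/ (4 * k) = j')%N by rewrite divnMDl // divn_small // addn0.
  have f1 : ((j * (4 * k) + l) %% (4 * k) = l)%N by rewrite modnMDl modn_small.
  have f2 : ((j' * (4 * k) + l') %% (4 * k) = l')%N by rewrite modnMDl modn_small.
  split; apply: val_inj => /=; first by rewrite -e1 h e2.
  by rewrite -f1 h f2.
pose Tj j l := T (idx j l).
have sTj : forall j l, spanning_tree src tgt (Tj j l) by move=> j l; apply: sT.
have dTj : forall j l l', l != l' -> [disjoint Tj j l & Tj j l'].
  move=> j l l' nl; apply: dT; apply/negP => /eqP /idx_inj [_ e]; by rewrite e eqxx in nl.
pose U j := \bigcup_l Tj j l.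
pose Pb j (C : {set E}) := [&& C \subset U j, [forall x, [forall y, connect (adj src tgt C) x y]] &
    [forall v, k * deg src tgt C v < deg src tgt (U j) v]].
have hCb : forall j, exists C, Pb j C.
  move=> j; have [C [h1 h2 h3]] := core ll k0 nV (sTj j) (dTj j).
  exists C; apply/and3P; split => //.
    by apply/forallP => x; apply/forallP => y; apply: h2.
  by apply/forallP.
pose C j := xchoose (hCb j).
have PC : forall j, Pb j (C j) by move=> j; apply: xchooseP.
have CU : forall j, C j \subset U j by move=> j; case/and3P: (PC j).
have cC : forall j, connectedF src tgt (C j).
  by move=> j x y; case/and3P: (PC j) => _ /forallP /(_ x) /forallP /(_ y).
have dC : forall j v, k * deg src tgt (C j) v < deg src tgt (U j) v.
  by move=> j v; case/and3P: (PC j) => _ _ /forallP.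
have dU : forall j j', j != j' -> [disjoint U j & U j'].
  move=> j j' nj; rewrite -setI_eq0; apply/eqP/setP => e; rewrite inE in_set0.
  apply/negP => /andP[/bigcupP[l _ el] /bigcupP[l' _ el']].
  have ne : idx j l != idx j' l'.
    by apply/negP => /eqP /idx_inj [ej _]; rewrite ej eqxx in nj.
  by rewrite (disjointFr (dT _ _ ne) el) in el'.
have dCC : forall j j', j != j' -> [disjoint C j & C j'].
  move=> j j' nj; apply: disjointWl (CU j) _; apply: disjointWr (CU j') _; exact: dU.
pose H := \bigcup_j C j.
exists H; split.
- move=> S lt.
  case: (boolP [exists j, [disjoint C j & S]]) => [/existsP [j dj]|nd].
    move=> x y; apply: conn_mono (cC j x y); apply/subsetP => e ej.
    rewrite in_setD (disjointFr dj ej) /=; by apply/bigcupP; exists j.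
  exfalso.
  have h : (\sum_(j < q) #|C j :&: S| <= #|S|)%N.
    apply: sum_card_disj => [j|j j' nj]; first exact: subsetIr.
    by apply: disjointWl (subsetIl _ _) _; apply: disjointWr (subsetIl _ _) _; apply: dCC.
  have h' : (\sum_(j < q) 1 <= \sum_(j < q) #|C j :&: S|)%N.
    apply: leq_sum => j _; rewrite card_gt0; move: nd; rewrite negb_exists => /forallP /(_ j).
    by rewrite -setI_eq0.
  move: h'; rewrite sum_nat_const card_ord muln1 => h'.
  by have := leq_trans h' h; rewrite leqNgt lt.
- move=> v.
  have h1 : (deg src tgt H v <= \sum_j deg src tgt (C j) v)%N by apply: deg_bigcup.
  have h2 : (\sum_j deg src tgt (U j) v <= deg src tgt [set: E] v)%N.
    by apply: sum_deg_disj => [j|]; [apply: subsetT|exact: dU].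
  have h3 : (\sum_(j < q) (k * deg src tgt (C j) v).+1 <= \sum_j deg src tgt (U j) v)%N.
    by apply: leq_sum => j _; apply: dC.
  have h4 : (\sum_(j < q) (k * deg src tgt (C j) v).+1 = k * \sum_(j < q) deg src tgt (C j) v + q)%N.
    under eq_bigr do rewrite -addn1.
    by rewrite big_split /= sum_nat_const card_ord muln1 big_distrr.
  have key : (deg src tgt H v * k < deg src tgt [set: E] v)%N.
    rewrite mulnC; apply: leq_trans (_ : k * \sum_j deg src tgt (C j) v + q <= _)%N.
      by rewrite -(addn1 (k * _)) leq_add // leq_mul2l h1 orbT.
    by rewrite -h4; apply: leq_trans h3 h2.
  rewrite ltr_pdivlMr ?ltr0n // -natrM ltr_nat.
  exact: key.
Qed.
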